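(* Let $X$ be a Banach space with $n(X)=1$. If $X$ has the $\mathbf{L}_{p,p}$-nu, then the norm of $X$ is strongly subdifferentiable (at every point).
   Context: Let $X$ be a Banach space over $\mathbb{K}\in\{\mathbb{R},\mathbb{C}\}$, $\mathcal{L}(X)$ the bounded linear operators on $X$. $\Pi(X)=\{(x,x^* )\in S_X\times S_{X^*}: x^*(x)=1\}$; $v(T)=\sup\{|x^*(Tx)|:(x,x^* )\in\Pi(X)\}$; $n(X)=\inf\{v(T): T\in\mathcal{L}(X),\ \|T\|=1\}$. $X$ has the $\mathbf{L}_{p,p}$-nu if for every $\varepsilon>0$ and $(x,x^* )\in\Pi(X)$ there is $\eta(\varepsilon,(x,x^* ))>0$ such that whenever $T\in\mathcal{L}(X)$ with $v(T)=1$ satisfies $|x^*(Tx)|>1-\eta(\varepsilon,(x,x^* ))$, there is $S\in\mathcal{L}(X)$ with $v(S)=1$, $|x^*(Sx)|=1$ and $\|S-T\|<\varepsilon$. The norm of $X$ is strongly subdifferentiable (SSD) at $x\in X$ if the limit $\lim_{t\to0^+}\frac{\|x+th\|-\|x\|}{t}$ exists uniformly in $h\in B_X$; the norm is SSD if it is SSD at every point. *)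

(* Defs.v *)
From HB Require Import structures.
From mathcomp Require Import all_boot all_order all_algebra.
From mathcomp Require Import complex.
From mathcomp Require Import all_classical all_reals all_analysis.
Set Implicit Arguments. Unset Strict Implicit. Unset Printing Implicit Defensive.
Import Order.TTheory GRing.Theory Num.Theory.
Import numFieldNormedType.Exports.
Local Open Scope ring_scope.

Definition scalarK (R : realType) (b : bool) : numFieldType :=
  if b then (R[i] : numFieldType) else (R : numFieldType).

Section Defs.
Context {K : numFieldType}.

Definition is_sup (A : K -> Prop) (c : K) : Prop :=
  (forall a, A a -> a <= c) /\ (forall e, 0 < e -> exists a, A a /\ c - e < a).
Definition is_inf (A : K -> Prop) (c : K) : Prop :=
  (forall a, A a -> c <= a) /\ (forall e, 0 < e -> exists a, A a /\ a < c + e).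

Context {X : normedModType K}.

Definition bounded_op (T : {linear X -> X}) : Prop :=
  exists M : K, forall x, `|T x| <= M * `|x|.
Definition bounded_fun (f : {linear X -> K^o}) : Prop :=
  exists M : K, forall x, `|f x| <= M * `|x|.

Definition is_opnorm {Y : normedModType K} (F : X -> Y) (c : K) : Prop :=
  is_sup (fun a => exists x, `|x| <= 1 /\ a = `|F x|) c.

Definition in_Pi (x : X) (f : {linear X -> K^o}) : Prop :=
  `|x| = 1 /\ bounded_fun f /\ is_opnorm f 1 /\ f x = 1.

Definition is_numrad (T : {linear X -> X}) (c : K) : Prop :=
  is_sup (fun a => exists x f, in_Pi x f /\ a = `|f (T x)|) c.

Definition is_numindex (c : K) : Prop :=
  is_inf (fun a => exists T : {linear X -> X},
             bounded_op T /\ is_opnorm T 1 /\ is_numrad T a) c.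

Definition Lpp_nu : Prop :=
  forall e : K, 0 < e -> forall (x : X) (f : {linear X -> K^o}), in_Pi x f ->
  exists eta : K, 0 < eta /\
  forall T : {linear X -> X}, bounded_op T -> is_numrad T 1 ->
    1 - eta < `|f (T x)| ->
    exists S : {linear X -> X}, bounded_op S /\ is_numrad S 1 /\
      `|f (S x)| = 1 /\
      exists c, is_opnorm (fun y => S y - T y) c /\ c < e.

Definition SSD_at (x : X) : Prop :=
  exists D : X -> K, forall e : K, 0 < e -> exists d : K, 0 < d /\
    forall t : K, 0 < t -> t < d -> forall h : X, `|h| <= 1 ->
      `|(`|x + t *: h| - `|x|) / t - D h| < e.

Definition norm_SSD : Prop := forall x : X, SSD_at x.
End Defs.

(* Main.v *)
Require Import Defs.
From HB Require Import structures.
From mathcomp Require Import all_boot all_order all_algebra.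
From mathcomp Require Import complex.
From mathcomp Require Import all_classical all_reals all_analysis.
From mathcomp Require Import ring lra.
Import Order.TTheory GRing.Theory Num.Theory.
Import numFieldNormedType.Exports.
Local Open Scope ring_scope.

Module Part1.
Import Order.TTheory GRing.Theory Num.Theory.
Import numFieldNormedType.Exports.
Local Open Scope ring_scope.

Section KLemmas.
Context {R : realType}.

Definition emb (b : bool) : R -> scalarK R b :=
  if b as b' return R -> scalarK R b' then (fun r : R => (r%:C)%C : R[i])
  else (fun r : R => r).
Definition ReK (b : bool) : scalarK R b -> R :=
  if b as b' return scalarK R b' -> R then (fun z : R[i] => complex.Re z)
  else (fun r : R => r).

Context {b : bool}.
Local Notation K := (scalarK R b).
Local Notation e := (@emb b).
Local Notation Re := (@ReK b).
Implicit Types (k x y : K) (r s : R).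

Lemma embD r s : e (r + s) = e r + e s.
Proof. by case: b => //=; rewrite rmorphD. Qed.
Lemma embN r : e (- r) = - e r.
Proof. by case: b => //=; rewrite rmorphN. Qed.
Lemma embB r s : e (r - s) = e r - e s.
Proof. by rewrite embD embN. Qed.
Lemma embM r s : e (r * s) = e r * e s.
Proof. by case: b => //=; rewrite rmorphM. Qed.
Lemma emb0 : e 0 = 0. Proof. by case: b => //=; rewrite rmorph0. Qed.
Lemma emb1 : e 1 = 1. Proof. by case: b => //=; rewrite rmorph1. Qed.
Lemma embV r : e (r^-1) = (e r)^-1.
Proof.
by case: b => //=; rewrite fmorphV.
Qed.
Lemma ReK_emb r : Re (e r) = r. Proof. by case: b. Qed.
Lemma ReKD x y : Re (x + y) = Re x + Re y. Proof. by case: b x y => // -[? ?] [? ?]. Qed.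
Lemma ReKN x : Re (- x) = - Re x. Proof. by case: b x => // -[? ?]. Qed.
Lemma ReKB x y : Re (x - y) = Re x - Re y. Proof. by rewrite ReKD ReKN. Qed.
Lemma ReK_embM r k : Re (e r * k) = r * Re k.
Proof. by case: b k => //= -[a c] /=; rewrite mul0r subr0. Qed.
Lemma emb_le r s : (e r <= e s) = (r <= s).
Proof. by case: b => //=; rewrite lecR. Qed.
Lemma emb_lt r s : (e r < e s) = (r < s).
Proof. by case: b => //=; rewrite ltcR. Qed.
Lemma real_embRe k : k \is Num.real -> e (Re k) = k.
Proof. by case: b k => //= k /RRe_real. Qed.
Lemma ge0_embRe k : 0 <= k -> e (Re k) = k.
Proof. by move=> k0; apply: real_embRe; rewrite realE k0. Qed.
Lemma norm_embRe k : e (Re `|k|) = `|k|.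
Proof. exact: ge0_embRe. Qed.
Lemma ReK_le x y : x <= y -> Re x <= Re y.
Proof. by case: b x y => //= x y; rewrite lecE => /andP[]. Qed.
Lemma ReK_lt x y : x < y -> Re x < Re y.
Proof. by case: b x y => //= x y; rewrite ltcE => /andP[]. Qed.
Lemma ReK_le_norm k : Re k <= Re `|k|.
Proof.
case: b k => //= k; first by have := normc_ge_Re k; rewrite lecR => /(le_trans (ler_norm _)).
exact: ler_norm.
Qed.
Lemma ReK_normD k : `|Re k| <= Re `|k|.
Proof.
case: b k => //= k; by have := normc_ge_Re k; rewrite lecR.
Qed.
Lemma norm_emb r : `|e r| = e `|r|.
Proof. by case: b => //=; rewrite normc_def /= expr0n /= addr0 sqrtr_sqr. Qed.
Lemma ReK_ge0 k : 0 <= k -> 0 <= Re k.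
Proof. by move=> /(@ReK_le 0 k); case: b k. Qed.
Lemma lt0_emb k : 0 < k -> exists r, 0 < r /\ k = e r.
Proof.
move=> k0; exists (Re k); split; first by have := @ReK_lt 0 k k0; case: b k k0.
by rewrite ge0_embRe // ltW.
Qed.
End KLemmas.
Arguments ReK_le {R b x y}.
Arguments ReK_lt {R b x y}.
Arguments ReK_ge0 {R b k}.
Arguments real_embRe {R b k}.
Arguments ge0_embRe {R b k}.
Arguments lt0_emb {R b k}.

End Part1.
Import Part1.

Module Part2.
Import Order.TTheory GRing.Theory Num.Theory.
Import numFieldNormedType.Exports.
Local Open Scope ring_scope.
Set Implicit Arguments. Unset Strict Implicit. Unset Printing Implicit Defensive.

Section GenK.
Variable (K : numFieldType).
Implicit Types (A B : K -> Prop) (a c k : K).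

Lemma is_sup_ge0 A c : is_sup A c -> (forall a, A a -> 0 <= a) -> 0 <= c.
Proof.
move=> [ub adh] A0; have [a [Aa _]] := adh 1 ltr01.
exact: le_trans (A0 _ Aa) (ub _ Aa).
Qed.

Lemma is_sup_le A c M : is_sup A c -> (forall a, A a -> 0 <= a) ->
  M \is Num.real -> (forall a, A a -> a <= M) -> c <= M.
Proof.
move=> Hs A0 Mr AM; have c0 := is_sup_ge0 Hs A0.
have cr : c \is Num.real by rewrite ger0_real.
rewrite real_leNgt //; apply/negP => Mc.
have cM : 0 < c - M by rewrite subr_gt0.
have [a [Aa ha]] := Hs.2 (c - M) cM.
move: ha; rewrite opprB addrCA subrr addr0 => /lt_le_trans /(_ (AM _ Aa)).
by rewrite ltxx.
Qed.

Lemma is_sup_scale A B k c : 0 < k -> is_sup A c ->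
  (forall a, B a -> exists a0, A a0 /\ a = k * a0) ->
  (forall a0, A a0 -> B (k * a0)) -> is_sup B (k * c).
Proof.
move=> k0 [ub adh] BA AB; split.
  by move=> a /BA [a0 [Aa0 ->]]; rewrite ler_pM2l // ub.
move=> ep ep0; have [a0 [Aa0 ha0]] := adh (ep / k) (divr_gt0 ep0 k0).
exists (k * a0); split; first exact: AB.
by move: ha0; rewrite -(ltr_pM2l k0) mulrBr mulrCA divff ?gt_eqF // mulr1.
Qed.

Variable X : normedModType K.
Implicit Types (x z w : X).

Lemma opnorm_le {Y : normedModType K} (F : X -> Y) c :
  (forall k z, F (k *: z) = k *: F z) -> is_opnorm F c ->
  forall z, `|F z| <= c * `|z|.
Proof.
move=> FZ [ub _] z.
have [->|z0] := eqVneq z 0.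
  have F0 : F 0 = 0 by rewrite -(scale0r (0:X)) FZ scale0r.
  by rewrite F0 !normr0 mulr0.
have nz : 0 < `|z| by rewrite normr_gt0.
have H : `|F (`|z|^-1 *: z)| <= c.
  apply: ub; exists (`|z|^-1 *: z); split => //.
  by rewrite normrZ ger0_norm ?invr_ge0 ?normr_ge0 // mulVf ?gt_eqF.
by move: H; rewrite FZ normrZ ger0_norm ?invr_ge0 ?normr_ge0 // ler_pdivrMl // mulrC.
Qed.

Lemma Pi_bound x (f : {linear X -> K^o}) : in_Pi x f -> forall z, `|f z| <= `|z|.
Proof.
move=> [_ [_ [Hf _]]] z.
have FZ : forall k w, f (k *: w) = k *: f w by move=> k w; rewrite linearZ.
have := @opnorm_le K^o f 1 FZ Hf z.
by rewrite mul1r.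
Qed.

Lemma Pi_norm1 x (f : {linear X -> K^o}) : in_Pi x f -> `|x| = 1.
Proof. by case. Qed.

Lemma opnorm_exists_bnd (S : X -> X) M :
  (forall z, `|S z| <= M * `|z|) -> forall z, `|z| <= 1 -> `|S z| <= `|M|.
Proof.
move=> HM z z1; have [->|z0] := eqVneq z 0.
  by have := HM 0; rewrite normr0 mulr0 => /le_trans; apply; rewrite normr_ge0.
have nz : 0 < `|z| by rewrite normr_gt0.
have M0 : 0 <= M by rewrite -(pmulr_lge0 _ nz) (le_trans _ (HM z)).
apply: (le_trans (HM z)); rewrite ger0_norm //.
by rewrite -{2}(mulr1 M) ler_wpM2l.
Qed.

End GenK.

Section Pack.
Variables (K : numFieldType) (X : normedModType K).
Definition mklinf (f : X -> K^o) (H : linear f) : {linear X -> K^o} :=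
  HB.pack f (GRing.isLinear.Build K X K^o *:%R f H).
Lemma mklinfE f H x : @mklinf f H x = f x. Proof. by []. Qed.
Definition mklinop (f : X -> X) (H : linear f) : {linear X -> X} :=
  HB.pack f (GRing.isLinear.Build K X X *:%R f H).
Lemma mklinopE f H x : @mklinop f H x = f x. Proof. by []. Qed.

Lemma rank1_linear (g : {linear X -> K^o}) (u : X) : linear (fun z => g z *: u).
Proof. by move=> a z w; rewrite linearP /= scalerDl scalerA. Qed.
Definition rank1 g u := mklinop (rank1_linear g u).

Lemma scaleop_linear (m : K) (S : {linear X -> X}) : linear (fun z => m *: S z).
Proof. by move=> a z w; rewrite linearP scalerDr !scalerA mulrC. Qed.
Definition scaleop m S := mklinop (scaleop_linear m S).
End Pack.

End Part2.
Import Part2.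

Module Part3.
Import Order.TTheory GRing.Theory Num.Theory.
Import numFieldNormedType.Exports.
Local Open Scope ring_scope.
Set Implicit Arguments. Unset Strict Implicit. Unset Printing Implicit Defensive.

Section SupK.
Variables (R : realType) (b : bool).
Local Notation K := (scalarK R b).
Local Notation e := (@emb R b).
Local Notation Re := (@ReK R b).

Lemma sup_exK (A : K -> Prop) : (exists a, A a) -> (forall a, A a -> 0 <= a) ->
  (exists M, forall a, A a -> a <= M) -> exists c, is_sup A c.
Proof.
move=> [a0 Aa0] A0 [M AM].
pose A' : set R := fun r => A (e r).
have AE a : A a -> A' (Re a) by move=> Aa; rewrite /A' ge0_embRe //; exact: A0.
have hs : has_sup A'.
  split; first by exists (Re a0); exact: AE.
  exists (Re M) => r Ar; have := ReK_le (AM _ Ar); by rewrite ReK_emb.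
exists (e (sup A')); split.
  move=> a Aa; rewrite -(ge0_embRe (A0 _ Aa)) emb_le.
  exact: sup_upper_bound hs _ (AE _ Aa).
move=> ep /lt0_emb [r [r0 ->]].
have [r' Ar' hr'] := sup_adherent r0 hs.
by exists (e r'); split => //; rewrite -embB emb_lt.
Qed.

Variable X : normedModType K.
Implicit Types (x z w : X).

Definition PiNE := exists x (f : {linear X -> K^o}), in_Pi x f.

Lemma numrad_exists (T : {linear X -> X}) : PiNE ->
  (forall z, `|T z| <= `|z|) -> exists a, is_numrad T a /\ a <= 1.
Proof.
move=> [x0 [f0 P0]] HT.
have ub a : (exists x (f : {linear X -> K^o}), in_Pi x f /\ a = `|f (T x)|) -> a <= 1.
  move=> [x [f [Pf ->]]]; apply: le_trans (Pi_bound Pf _) _.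
  by apply: le_trans (HT _) _; rewrite (Pi_norm1 Pf).
have [a Ha] : exists a, is_numrad T a.
  apply: sup_exK.
  - by exists `|f0 (T x0)|, x0, f0.
  - by move=> a [x [f [_ ->]]].
  - by exists 1.
exists a; split => //; apply: is_sup_le Ha _ _ ub; first by move=> a' [x [f [_ ->]]].
exact: real1.
Qed.

Lemma numrad_one (T : {linear X -> X}) : @is_numindex _ X 1 -> PiNE ->
  bounded_op T -> is_opnorm T 1 -> is_numrad T 1.
Proof.
move=> Hn HP HB Ho.
have HT z : `|T z| <= `|z|.
  have TZ : forall k w, T (k *: w) = k *: T w by move=> k w; rewrite linearZ.
  by have := opnorm_le TZ Ho z; rewrite mul1r.
have [a [Ha a1]] := numrad_exists HP HT.
suff -> : 1 = a by [].
by apply/le_anti; rewrite a1 andbT; apply: Hn.1; exists T.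
Qed.

Lemma opnorm_exists (S : {linear X -> X}) : bounded_op S -> exists m, is_opnorm S m.
Proof.
move=> [M HM]; apply: sup_exK.
- by exists `|S 0|, 0; rewrite normr0 ler01.
- by move=> a [z [_ ->]].
exists `|M| => a [z [z1 ->]]; exact: opnorm_exists_bnd HM z z1.
Qed.

Lemma S_contract (S : {linear X -> X}) : @is_numindex _ X 1 -> PiNE ->
  bounded_op S -> is_numrad S 1 -> forall z, `|S z| <= `|z|.
Proof.
move=> Hn HP HB Hr.
have SZ : forall k w, S (k *: w) = k *: S w by move=> k w; rewrite linearZ.
have [m Hm] := opnorm_exists HB.
have m0 : 0 <= m by apply: is_sup_ge0 Hm _ => a [z [_ ->]].
have Hle := opnorm_le SZ Hm.
have [m0e|mn0] := eqVneq m 0.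
  by move=> z; apply: le_trans (Hle z) _; rewrite m0e mul0r.
have mp : 0 < m by rewrite lt_def mn0.
have mi : 0 < m^-1 by rewrite invr_gt0.
pose S' := scaleop m^-1 S.
have S'E z : S' z = m^-1 *: S z by [].
have o1 : is_opnorm S' 1.
  rewrite -(mulVf mn0); apply: (is_sup_scale mi Hm).
    move=> a [z [z1 ->]]; exists `|S z|; split; first by exists z.
    by rewrite S'E normrZ gtr0_norm.
  by move=> a0 [z [z1 ->]]; exists z; split => //; rewrite S'E normrZ gtr0_norm.
have r1 : is_numrad S' (m^-1 * 1).
  apply: (is_sup_scale mi Hr).
    move=> a [x [f [Pf ->]]]; exists `|f (S x)|; split; first by exists x, f.
    by rewrite S'E linearZ /= normrM gtr0_norm.
  move=> a0 [x [f [Pf ->]]]; exists x, f; split => //.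
  by rewrite S'E linearZ /= normrM gtr0_norm.
have bS' : bounded_op S'.
  case: HB => M HM; exists (m^-1 * M) => z; rewrite S'E normrZ gtr0_norm // -mulrA.
  by rewrite ler_pM2l.
have := Hn.1 _ (ex_intro _ S' (conj bS' (conj o1 r1))).
rewrite mulr1 invf_ge1 // => m1 z.
apply: le_trans (Hle z) _; rewrite -{2}(mul1r `|z|); apply: ler_wpM2r => //.
Qed.
End SupK.

End Part3.
Import Part3.

Module Part4.
Import Order.TTheory GRing.Theory Num.Theory.
Import numFieldNormedType.Exports.
Local Open Scope ring_scope.
Local Open Scope classical_set_scope.
Set Implicit Arguments. Unset Strict Implicit. Unset Printing Implicit Defensive.

Section InfR.
Variable R : realType.
Implicit Types (A B : set R) (c s : R).

Lemma inf_add2 A B c : A !=set0 -> B !=set0 ->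
  (forall a b, A a -> B b -> c <= a + b) -> (c <= inf A + inf B)%R.
Proof.
move=> An Bn H.
have H1 bb : B bb -> (c - bb <= inf A)%R.
  move=> Bb; apply: lb_le_inf => // a Aa; rewrite lerBlDr; exact: H.
rewrite -lerBlDl; apply: lb_le_inf => // bb Bb.
by rewrite lerBlDl -lerBlDr; exact: H1.
Qed.

Lemma inf_scale_le A c s : (0 < s)%R -> A !=set0 ->
  (forall a, A a -> c <= s * a) -> (c <= s * inf A)%R.
Proof.
move=> s0 An H; rewrite -ler_pdivrMl //; apply: lb_le_inf => // a Aa.
by rewrite ler_pdivrMl //; exact: H.
Qed.
End InfR.

Section HBreal.
Variables (R : realType) (b : bool).
Local Notation K := (scalarK R b).
Local Notation e := (@emb R b).
Local Notation Re := (@ReK R b).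
Variable X : normedModType K.
Implicit Types (x z w : X) (q : X -> R).

Definition N z : R := Re `|z|.

Definition sublin q := (forall z w, q (z + w) <= q z + q w)%R /\
  (forall r z, (0 < r)%R -> q (e r *: z) = r * q z).

Lemma hom_of_le q : (forall r z, (0 < r)%R -> q (e r *: z) <= r * q z)%R ->
  forall r z, (0 < r)%R -> q (e r *: z) = r * q z.
Proof.
move=> H r z r0; apply/le_anti; rewrite H //=.
have ri : (0 < r^-1)%R by rewrite invr_gt0.
have := H _ (e r *: z) ri; rewrite scalerA -embM mulVf ?gt_eqF // emb1 scale1r.
by rewrite ler_pdivlMl.
Qed.

Lemma N_sublin : sublin N.
Proof.
split; first by move=> z w; rewrite /N -ReKD; apply: ReK_le; exact: ler_normD.
move=> r z r0; rewrite /N normrZ norm_emb ger0_norm ?ltW //.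
by rewrite ReK_embM.
Qed.

Lemma sl0 q : sublin q -> q 0 = 0.
Proof.
move=> [_ H]; have := H 2%R 0 (ltr0Sn R 1); rewrite scaler0; lra.
Qed.

Lemma slhom q : sublin q -> forall t z, (0 <= t)%R -> q (e t *: z) = t * q z.
Proof.
move=> Hq t z; rewrite le_eqVlt => /orP[/eqP <-|t0]; last exact: Hq.2.
by rewrite emb0 scale0r mul0r sl0.
Qed.

Lemma slneg q : sublin q -> forall z, (0 <= q z + q (- z))%R.
Proof. by move=> Hq z; rewrite -(sl0 Hq) -(subrr z); exact: Hq.1. Qed.

Definition rset q z w : set R :=
  fun a => exists t, (0 <= t)%R /\ a = q (w + e t *: z) - t * q z.
Definition rc q z w : R := inf (rset q z w).

Section RC.
Variables (q : X -> R) (z : X).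
Hypothesis Hq : sublin q.

Lemma rset_ne w : rset q z w !=set0.
Proof. by exists (q (w + e 0 *: z) - 0 * q z), 0%R. Qed.

Lemma rset_lb w : lbound (rset q z w) (- q (- w)).
Proof.
move=> a [t [t0 ->]].
have := Hq.1 (w + e t *: z) (- w); rewrite addrC addKr (slhom Hq _ t0) => H; lra.
Qed.

Lemma rset_inf w : has_lbound (rset q z w).
Proof. by exists (- q (- w)); exact: rset_lb. Qed.

Lemma rc_le w : (rc q z w <= q w)%R.
Proof.
apply: ge_inf; first exact: rset_inf.
by exists 0%R; split => //; rewrite emb0 scale0r addr0 mul0r subr0.
Qed.

Lemma rc_neg : (rc q z (- z) <= - q z)%R.
Proof.
apply: ge_inf; first exact: rset_inf.
by exists 1%R; split => //; rewrite emb1 scale1r addNr (sl0 Hq) mul1r sub0r.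
Qed.

Lemma rc_ge w : (- q (- w) <= rc q z w)%R.
Proof. by apply: lb_le_inf; [exact: rset_ne|exact: rset_lb]. Qed.

Lemma rc_sublin : sublin (rc q z).
Proof.
split.
  move=> w1 w2; apply: inf_add2; [exact: rset_ne|exact: rset_ne|].
  move=> _ _ [t1 [t10 ->]] [t2 [t20 ->]].
  apply: le_trans (ge_inf (rset_inf _) _) _.
    by exists (t1 + t2)%R; split; [exact: addr_ge0|].
  have := Hq.1 (w1 + e t1 *: z) (w2 + e t2 *: z).
  rewrite addrACA -scalerDl -embD mulrDl => H; lra.
apply: hom_of_le => s w s0; apply: inf_scale_le => //; first exact: rset_ne.
move=> _ [t [t0 ->]]; apply: ge_inf; first exact: rset_inf.
exists (s * t)%R; split; first by rewrite mulr_ge0 // ltW.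
rewrite mulrBr -(Hq.2 _ _ s0) scalerDr scalerA -embM mulrA //.
Qed.
End RC.

Definition p0 x := rc N x.

Lemma p0_sublin x : sublin (p0 x). Proof. exact: rc_sublin N_sublin. Qed.

Record Tq x := MkT { tq :> X -> R; tq_sl : sublin tq; tq_le : forall w, (tq w <= p0 x w)%R }.

Lemma tq_lb x (t : Tq x) w : (- p0 x (- w) <= t w)%R.
Proof.
have := slneg (tq_sl t) w; rewrite -lerBlDr sub0r => H.
by apply: le_trans H; rewrite lerN2 tq_le.
Qed.

Lemma minimal_exists x : exists m : Tq x, forall t : Tq x, (forall w, (t w <= m w)%R) ->
  forall w, t w = m w.
Proof.
pose Rl := fun s t : Tq x => `[< forall w, (t w <= s w)%R >].
have [] := @Zorn (Tq x) Rl.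
- by move=> t; apply/asboolP => w.
- move=> r s t /asboolP H1 /asboolP H2; apply/asboolP => w; exact: le_trans (H2 w) (H1 w).
- move=> [s sl sle] [t tl tle] /asboolP H1 /asboolP H2.
  have st : s = t by apply/funext => w; apply/le_anti; rewrite H1 H2.
  by subst t; congr MkT; apply: Prop_irrelevance.
- move=> A Atot.
  have [[t0 At0]|A0] := pselect (exists t, A t); last first.
    exists (MkT (p0_sublin x) (fun w => lexx _)) => s As; exfalso; apply: A0; by exists s.
  pose cs w : set R := fun a => exists t : Tq x, A t /\ a = t w.
  have csn w : cs w !=set0 by exists (t0 w), t0.
  have csl w : has_lbound (cs w) by exists (- p0 x (- w)) => _ [t [_ ->]]; exact: tq_lb.
  have cle (t : Tq x) w : A t -> (inf (cs w) <= t w)%R.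
    by move=> At; apply: ge_inf => //; exists t.
  have csl' : sublin (fun w => inf (cs w)).
    split.
      move=> w1 w2; apply: inf_add2 => // _ _ [t1 [At1 ->]] [t2 [At2 ->]].
      have [/asboolP H|/asboolP H] := Atot _ _ At1 At2.
        apply: le_trans (cle t2 _ At2) _; apply: le_trans ((tq_sl t2).1 w1 w2) _.
        by rewrite lerD2r H.
      apply: le_trans (cle t1 _ At1) _; apply: le_trans ((tq_sl t1).1 w1 w2) _.
      by rewrite lerD2l H.
    apply: hom_of_le => s w s0; apply: inf_scale_le => // _ [t [At ->]].
    by rewrite -(tq_sl t).2 //; exact: cle.
  exists (MkT csl' (fun w => le_trans (cle t0 w At0) (tq_le t0 w))).
  by move=> s As; apply/asboolP => w /=; exact: cle.
move=> m Hm; exists m => t Ht w.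
have : t = m by apply: Hm; apply/asboolP.
by move=> ->.
Qed.

Lemma HB_real x : exists u : X -> R, (forall z w, u (z + w) = u z + u w)%R /\
  (forall r z, u (e r *: z) = r * u z)%R /\ (forall z, (u z <= N z)%R) /\ u x = N x.
Proof.
have [m Hm] := minimal_exists x.
have mneg z : m (- z) = (- m z)%R.
  pose t := MkT (rc_sublin z (tq_sl m)) (fun w => le_trans (rc_le z (tq_sl m) w) (tq_le m w)).
  have := Hm t (fun w => rc_le z (tq_sl m) w) (- z) => /= E.
  apply/le_anti; rewrite -E (rc_neg z (tq_sl m)) /= E.
  by have := slneg (tq_sl m) z; lra.
have madd z w : m (z + w) = (m z + m w)%R.
  apply/le_anti; rewrite (tq_sl m).1 /=.
  have := (tq_sl m).1 (- z) (- w); rewrite -opprD !mneg; lra.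
have mle z : (m z <= N z)%R.
  by apply: le_trans (tq_le m z) _; exact: rc_le x N_sublin z.
exists m; split => //; split.
  move=> r z; have [r0|r0|->] := ltgtP r 0%R; last by rewrite emb0 scale0r mul0r sl0 //; exact: tq_sl.
    rewrite -(opprK r) embN scaleNr mneg (tq_sl m).2 ?oppr_gt0 //.
    by rewrite !(mulNr, opprK).
  exact: (tq_sl m).2.
split => //; apply/le_anti; rewrite mle /=.
have := tq_lb m x; have := rc_neg x N_sublin; rewrite /p0; lra.
Qed.
End HBreal.

End Part4.
Import Part4.

Module Part5.
Import Order.TTheory GRing.Theory Num.Theory.
Import numFieldNormedType.Exports.
Local Open Scope ring_scope.
Local Open Scope complex_scope.
Set Implicit Arguments. Unset Strict Implicit. Unset Printing Implicit Defensive.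

Lemma unit_rotate (K : numFieldType) (k : K) : exists l : K, `|l| = 1 /\ l * k = `|k|.
Proof.
have [->|k0] := eqVneq k 0; first by exists 1; rewrite normr1 mulr0 normr0.
exists (`|k| / k); split; last by rewrite divfK.
by rewrite normrM normrV ?unitfE // normr_id divff // normr_eq0.
Qed.

Lemma HBK (R : realType) (b : bool) (X : normedModType (scalarK R b)) (x : X) :
  exists f : {linear X -> (scalarK R b)^o}, (forall z, `|f z| <= `|z|) /\ f x = `|x|.
Proof.
have [u [uadd [uhom [ule ux]]]] := HB_real x.
move: X x u uadd uhom ule ux; case: b => X x u uadd uhom ule ux; last first.
  have ul : linear (u : X -> (scalarK R false)^o).
    by move=> a z w; rewrite uadd; have := uhom a z => /= ->.
  exists (mklinf ul); rewrite mklinfE; split; last exact: ux.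
  move=> z; rewrite mklinfE ler_norml; apply/andP; split; last exact: ule.
  have := ule (- z); have := uhom (-1) z; rewrite /N /= normrN scaleN1r => -> ; lra.
pose f (z : X) : R[i] := (u z)%:C - 'i * (u ('i *: z))%:C.
have fD z w : f (z + w) = f z + f w.
  by rewrite /f scalerDr !uadd !rmorphD /=; ring.
have fR (a : R) z : f (a%:C *: z) = a%:C * f z.
  rewrite /f; have -> : 'i *: (a%:C *: z) = a%:C *: ('i *: z) by rewrite !scalerA mulrC.
  have := uhom a z; have := uhom a ('i *: z).
  by move=> /= -> ->; rewrite !rmorphM /=; ring.
have fI z : f ('i *: z) = 'i * f z.
  rewrite /f scalerA (_ : 'i * 'i = -1 :> R[i]); last by rewrite -expr2 sqr_i.
  rewrite scaleN1r; have := uhom (-1) z; rewrite /= rmorphN1 scaleN1r => ->.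
  rewrite rmorphM rmorphN1 /= mulrBr.
  have -> : forall w : R[i], 'i * ('i * w) = - w.
    by move=> w; rewrite mulrA -expr2 sqr_i mulN1r.
  ring.
have fZ (k : R[i]) z : f (k *: z) = k * f z.
  rewrite {1}(complexE k) scalerDl -scalerA fD fR fI fR.
  by rewrite {3}(complexE k) mulrDl mulrA.
have fl : linear (f : X -> (scalarK R true)^o).
  by move=> a z w; rewrite fD fZ.
have ReF z : complex.Re (f z) = u z.
  by rewrite /f /= mul0r mulr0 subr0 subr0.
have fb z : `|f z| <= `|z|.
  have [l [l1 lf]] := unit_rotate (f z).
  have E : f (l *: z) = `|f z| by rewrite fZ.
  have := ule (l *: z); rewrite -ReF E /N normrZ l1 mul1r => H.
  rewrite -(@norm_embRe R true (f z)) -(ge0_embRe (normr_ge0 z)) /= lecR; exact: H.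
exists (mklinf fl); rewrite !mklinfE; split => //.
have := fb x; move: ux; rewrite /N -ReF.
have nx : `|x| = (ReK true `|x|)%:C := esym (ge0_embRe (normr_ge0 x)).
have n0 : 0 <= ReK true `|x| by apply: ReK_ge0; exact: normr_ge0.
move: nx n0; set n := ReK true `|x| => nx n0; rewrite nx.
move: (f x) => [a c] /= ->.
rewrite normc_def /= lecR => Hs.
have s0 := sqrtr_ge0 (n ^+ 2 + c ^+ 2).
have sq := sqr_sqrtr (addr_ge0 (sqr_ge0 n) (sqr_ge0 c)).
move: Hs s0 sq; set s := Num.ExtraDef.sqrtr _ => Hs s0 sq.
have c0 : c = 0.
  apply/eqP; rewrite -sqrf_eq0 eq_le sqr_ge0 andbT; nra.
by rewrite c0.
Qed.

End Part5.
Import Part5.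

Module Part6.
Import Order.TTheory GRing.Theory Num.Theory.
Import numFieldNormedType.Exports.
Local Open Scope ring_scope.
Local Open Scope classical_set_scope.
Set Implicit Arguments. Unset Strict Implicit. Unset Printing Implicit Defensive.

Section Main.
Variables (R : realType) (b : bool).
Local Notation K := (scalarK R b).
Local Notation e := (@emb R b).
Local Notation Re := (@ReK R b).
Variable X : normedModType K.
Implicit Types (x y z w h : X).
Hypothesis Hn : @is_numindex _ X 1.
Hypothesis HL : @Lpp_nu _ X.

Lemma ReK1 : Re 1 = 1. Proof. by rewrite -emb1 ReK_emb. Qed.

Lemma normE z : `|z| = e (N z).
Proof. by rewrite /N ge0_embRe. Qed.

Lemma normZe r z : `|e r *: z| = e (`|r| * N z).
Proof. by rewrite normrZ norm_emb embM -normE. Qed.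

Lemma Pi_at x : `|x| = 1 -> exists f : {linear X -> K^o}, in_Pi x f.
Proof.
move=> x1; have [f [fb fx]] := HBK x; exists f; split => //; split.
  by exists 1 => z; rewrite mul1r; exact: fb.
split; last by rewrite fx x1.
split; first by move=> a [z [z1 ->]]; exact: le_trans (fb z) z1.
move=> ep ep0; exists `|f x|; split; first by exists x; rewrite x1.
by rewrite fx x1 normr1 ltrBlDr ltrDl.
Qed.

Lemma HP : PiNE X.
Proof.
have [a [[T [_ [_ Tr]]] _]] := Hn.2 1 ltr01.
have [_ [[x [f [Pf _]]] _]] := Tr.2 1 ltr01.
by exists x, f.
Qed.

Lemma core x (F : {linear X -> K^o}) : in_Pi x F -> forall eps : R, 0 < eps ->
  exists del : R, 0 < del /\ forall (tau : R) h, 0 < tau -> tau < del -> `|h| <= 1 ->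
  forall s : R, 0 < s -> (N (x + e tau *: h) - 1) / tau - eps <= (N (x + e s *: h) - 1) / s.
Proof.
move=> PF eps eps0.
have x1 : `|x| = 1 := PF.1.
have Fx1 : F x = 1 := PF.2.2.2.
have e8 : 0 < e (eps / 8) by rewrite -emb0 emb_lt divr_gt0.
have [eta [eta0 Heta]] := HL e8 PF.
have [eta' [eta'0 etaE]] := lt0_emb eta0.
exists (Order.min (Order.min (eta' / 2) (eps / 8)) (1 / 2)); split.
  by rewrite !lt_min !divr_gt0 ?ltr01.
move=> tau h tau0; rewrite !lt_min => /andP[/andP[t1 t2] t3] h1.
set y := x + e tau *: h.
set nh := N h.
have nh1 : nh <= 1 by rewrite /nh /N -ReK1; apply: ReK_le.
have nh0 : 0 <= nh by apply: ReK_ge0.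
have F1 : 1 <= N y + tau * nh.
  have := ler_normD y (- (e tau *: h)); rewrite /y addrK normrN normZe x1.
  rewrite (normE y) (ger0_norm (ltW tau0)) => /ReK_le; rewrite ReKD !ReK_emb ReK1.
  by rewrite /N.
have F2 : N y <= 1 + tau * nh.
  have := ler_normD x (e tau *: h); rewrite normZe x1 (ger0_norm (ltW tau0)).
  by move=> /ReK_le; rewrite ReKD !ReK_emb ReK1.
have [phi [phib phiy]] := HBK y.
have phiL : phi y = phi x + e tau * phi h by rewrite /y linearD linearZ.
have phh : Re `|phi h| <= nh by apply: ReK_le; exact: phib.
have yn : `|phi y| = `|y| by rewrite phiy normr_id.
pose T := rank1 phi x.
have TE z : T z = phi z *: x by [].
have Tn z : `|T z| = `|phi z| by rewrite TE normrZ x1 mulr1.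
have Tb : bounded_op T by exists 1 => z; rewrite mul1r Tn; exact: phib.
have ny0 : 0 < `|y|.
  rewrite (normE y) -emb0 emb_lt; nra.
have To : is_opnorm T 1.
  split; first by move=> a [z [z1 ->]]; rewrite Tn; exact: le_trans (phib z) z1.
  move=> ep ep0; exists `|T (`|y|^-1 *: y)|; split.
    exists (`|y|^-1 *: y); split => //.
    by rewrite normrZ ger0_norm ?invr_ge0 ?normr_ge0 // mulVf ?gt_eqF.
  rewrite Tn linearZ /= normrM yn ger0_norm ?invr_ge0 ?normr_ge0 // mulVf ?gt_eqF //.
  by rewrite ltrBlDr ltrDl.
have Tr1 := numrad_one Hn HP Tb To.
have FT z : F (T z) = phi z.
  by rewrite TE linearZ /= Fx1; exact: mulr1.
set px := Re `|phi x|.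
have F3 : N y <= px + tau * Re `|phi h|.
  have := ler_normD (phi x) (e tau * phi h); rewrite -phiL yn normrM norm_emb.
  rewrite (ger0_norm (ltW tau0)) => /ReK_le; rewrite ReKD ReK_embM.
  by rewrite /N.
have pxe : `|phi x| = e px by rewrite /px norm_embRe.
have hx : 1 - eta < `|F (T x)|.
  rewrite FT pxe etaE -emb1 -embB emb_lt.
  have : tau * Re `|phi h| <= tau * nh by rewrite ler_pM2l.
  have : tau * nh <= tau by rewrite ler_piMr // ltW.
  lra.
have [S [Sb [Sr1 [FS1 [c [Hc cl]]]]]] := Heta T Tb Tr1 hx.
have c0 : 0 <= c by apply: (is_sup_ge0 Hc) => a [z [_ ->]].
have cE : c = e (Re c) by rewrite ge0_embRe.
set c' := Re c in cE.
have c'l : c' < eps / 8 by move: cl; rewrite cE emb_lt.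
have Sc := S_contract Hn HP Sb Sr1.
have SmT z : `|S z - T z| <= c * `|z|.
  apply: (opnorm_le _ Hc) => k w /=; by rewrite !linearZZ scalerDr scalerA.
have D1 z : `|F (S z) - phi z| <= c * `|z|.
  by rewrite -FT -linearB; apply: le_trans (Pi_bound PF _) (SmT z).
have [l [l1 lF]] := unit_rotate (F (S x)).
rewrite FS1 in lF.
pose G z := l * F (S z).
have Gb z : `|G z| <= `|z|.
  by rewrite /G normrM l1 mul1r; apply: le_trans (Pi_bound PF _) (Sc z).
have GL (r : R) : G (x + e r *: h) = 1 + e r * G h.
  by rewrite /G !linearD !linearZ /= mulrDr lF mulrCA.
have Gphi : `|G h - phi h| <= `|l - 1| + c.
  have -> : G h - phi h = (l - 1) * F (S h) + (F (S h) - phi h) by rewrite /G; ring.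
  apply: le_trans (ler_normD _ _) _; apply: lerD.
    rewrite normrM -{2}(mulr1 `|l - 1|) ler_wpM2l //.
    by apply: le_trans (Pi_bound PF _) (le_trans (Sc h) h1).
  by apply: le_trans (D1 h) _; rewrite -{2}(mulr1 c) ler_wpM2l.
have l1x : `|l - 1| <= `|1 - phi x| + c.
  have -> : l - 1 = l * (1 - F (S x)) by rewrite mulrBr lF mulr1.
  rewrite normrM l1 mul1r.
  have -> : 1 - F (S x) = (1 - phi x) - (F (S x) - phi x) by ring.
  apply: le_trans (ler_normB _ _) _; apply: lerD => //.
  by apply: le_trans (D1 x) _; rewrite x1 mulr1.
have phx : phi x = `|y| - e tau * phi h by rewrite -phiy phiL addrK.
have F6 : Re `|1 - phi x| <= tau * nh + tau * nh.
  have -> : 1 - phi x = e (1 - N y) + e tau * phi h.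
    by rewrite phx embB emb1 -normE opprB addrA addrAC.
  move/ReK_le: (ler_normD (e (1 - N y)) (e tau * phi h)).
  rewrite normrM !norm_emb ReKD !ReK_emb ReK_embM (ger0_norm (ltW tau0)) => H.
  apply: le_trans H _; apply: lerD; last by rewrite ler_pM2l.
  by rewrite ler_norml; apply/andP; split; lra.
move=> s s0.
set g := Re (G h); set p := Re (phi h).
have I1 : 1 + s * g <= N (x + e s *: h).
  have := ReK_le_norm (G (x + e s *: h)); rewrite GL ReKD ReK1 ReK_embM => H.
  apply: le_trans H _; apply: ReK_le; rewrite -GL; exact: Gb.
have I2 : N y <= 1 + tau * p.
  have -> : N y = Re (phi y) by rewrite phiy.
  rewrite phiL ReKD ReK_embM lerD2r.
  apply: le_trans (ReK_le_norm _) _; rewrite -ReK1 -x1; apply: ReK_le; exact: phib.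
have I3 : p - Re `|G h - phi h| <= g.
  have := ReK_le_norm (phi h - G h); rewrite distrC ReKB -/p -/g => H; lra.
have I4 : Re `|G h - phi h| <= Re `|l - 1| + c'.
  by move/ReK_le: Gphi; rewrite cE ReKD ReK_emb.
have I5 : Re `|l - 1| <= Re `|1 - phi x| + c'.
  by move/ReK_le: l1x; rewrite cE ReKD ReK_emb.
have tn : tau * nh <= tau by rewrite ler_piMr // ltW.
have q1 : (N y - 1) / tau <= p by rewrite ler_pdivrMr //; lra.
have q2 : g <= (N (x + e s *: h) - 1) / s by rewrite ler_pdivlMr //; lra.
lra.
Qed.

Lemma SSD_unit x : `|x| = 1 -> SSD_at x.
Proof.
move=> x1; have [F PF] := Pi_at x1.
pose Q h : set R := fun a => exists s : R, 0 < s /\ a = (N (x + e s *: h) - 1) / s.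
have Qlb h : lbound (Q h) (- N h).
  move=> a [s [s0 ->]]; rewrite ler_pdivlMr //.
  have := ler_normD (x + e s *: h) (- (e s *: h)); rewrite addrK normrN normZe x1.
  rewrite (normE (x + _)) (ger0_norm (ltW s0)) => /ReK_le; rewrite ReKD !ReK_emb ReK1.
  lra.
have Qne h : Q h !=set0 by exists ((N (x + e 1 *: h) - 1) / 1), 1.
exists (fun h => e (inf (Q h))).
move=> ep /lt0_emb [eps [eps0 ->]].
have eps2 : 0 < eps / 2 by rewrite divr_gt0.
have [del [del0 Hd]] := core PF eps2.
exists (e del); split; first by rewrite -emb0 emb_lt.
move=> t t0; have [tau [tau0 tE]] := lt0_emb t0; rewrite tE emb_lt => td h h1.
set q := (N (x + e tau *: h) - 1) / tau.
have E : (`|x + e tau *: h| - `|x|) / e tau - e (inf (Q h)) = e (q - inf (Q h)).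
  by rewrite x1 (normE (x + _)) /q embB embM embV embB emb1.
rewrite E norm_emb emb_lt.
have up : inf (Q h) <= q.
  apply: ge_inf; first by exists (- N h); exact: Qlb.
  by exists tau.
have lo : q - eps / 2 <= inf (Q h).
  apply: lb_le_inf => // a [s [s0 ->]]; exact: Hd.
rewrite ger0_norm; lra.
Qed.
End Main.

Lemma SSD_0 (K : numFieldType) (X : normedModType K) : SSD_at (0 : X).
Proof.
exists (fun h => `|h|) => ep ep0; exists 1; split => // t t0 _ h _.
rewrite add0r normr0 subr0 normrZ (gtr0_norm t0) -mulrA mulrCA mulfV ?gt_eqF //.
by rewrite mulr1 subrr normr0.
Qed.

Lemma SSD_scale (K : numFieldType) (X : normedModType K) (x : X) :
  x != 0 -> SSD_at (`|x|^-1 *: x) -> SSD_at x.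
Proof.
move=> x0 [D HD]; exists D => ep ep0; have [d [d0 Hd]] := HD ep ep0.
have n0 : 0 < `|x| by rewrite normr_gt0.
set n := `|x| in n0 HD Hd *.
exists (d * n); split; first by rewrite mulr_gt0.
move=> t t0 td h h1.
have t'0 : 0 < t / n by rewrite divr_gt0.
have t'd : t / n < d by rewrite ltr_pdivrMr.
have := Hd _ t'0 t'd h h1.
suff -> : (`|x + t *: h| - n) / t =
  (`|n^-1 *: x + (t / n) *: h| - `|n^-1 *: x|) / (t / n) by [].
have -> : n^-1 *: x + (t / n) *: h = n^-1 *: (x + t *: h).
  by rewrite scalerDr scalerA mulrC.
rewrite !normrZ ger0_norm ?invr_ge0 ?normr_ge0 // -/n.
field; apply/andP; split; rewrite gt_eqF //.
Qed.


End Part6.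
Import Part6.

Theorem proposition3p2 (R : realType) (b : bool)
  (X : completeNormedModType (scalarK R b)) :
  @is_numindex _ X 1 -> @Lpp_nu _ X -> @norm_SSD _ X.
Proof.
move=> Hn HL x.
have [->|x0] := eqVneq x 0; first exact: SSD_0.
apply: (SSD_scale x0); apply: (SSD_unit Hn HL).
by rewrite normrZ ger0_norm ?invr_ge0 ?normr_ge0 // mulVf // normr_eq0.
Qed.
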